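(* Let $t_0\in[1/2,1]$ be a point where $t\mapsto\left[2t^{4/3}+2(\sqrt{t(1-t)})^{4/3}\right]^{3/4}$ attains its maximum on $[1/2,1]$ ($t_0\approx0.9147$). For every $k\in\mathbb{N}$, $$L_{\mathbb{R},2k}\ge\left[\sum_{j=0}^{2k}\binom{2k}{j}\left|\frac{A_j}{\binom{2k}{j}}\right|^{\frac{4k}{2k+1}}\right]^{\frac{2k+1}{4k}},$$ where $$A_j=\sum_{\ell=0}^{\lfloor j/2\rfloor}\frac{k!\,(-1)^{k-j+\ell}\,t_0^{k-j+2\ell}\,\big(2\sqrt{t_0(1-t_0)}\big)^{j-2\ell}}{\ell!\,(j-2\ell)!\,(k-j+\ell)!},\qquad j=0,\dots,2k$$ (terms with $k-j+\ell<0$ being $0$); these $A_j$ are the coefficients of $x^jy^{2k-j}$ in $(t_0x^2-t_0y^2+2\sqrt{t_0(1-t_0)}\,xy)^k$.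
   Context: All spaces are real. $\check P$ is the polar of an $m$-homogeneous polynomial $P$ (the unique symmetric $m$-linear form with $\check P(x,\dots,x)=P(x)$). For $x_1,\dots,x_N$ in a Banach space $X$, $\|(x_j)\|_{w,1}=\sup\{\sum_j|\varphi(x_j)|:\varphi\in X',\|\varphi\|\le1\}$. $L_{\mathbb{R},m}$ is the smallest constant $L$ such that for every real Banach space $X$, every continuous $m$-homogeneous $P:X\to\mathbb{R}$, every $N$ and all $x^{(k)}_j\in X$: $\big(\sum_{j_1,\dots,j_m=1}^N|\check P(x^{(1)}_{j_1},\dots,x^{(m)}_{j_m})|^{\frac{2m}{m+1}}\big)^{\frac{m+1}{2m}}\le L\|P\|\prod_{k=1}^m\|(x^{(k)}_j)_{j=1}^N\|_{w,1}$. $\lfloor h\rfloor$ is the integer part. *)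

(* Defs.v *)
From Stdlib Require Import Reals Lra Lia Arith.
Open Scope R_scope.

(* Real power of a nonnegative real, with the convention 0^p = 0
   (Stdlib's Rpower 0 p = 1, which is not what we want). *)
Definition rpow (x p : R) : R := if Rlt_dec 0 x then Rpower x p else 0.

Fixpoint fsum (N : nat) (g : nat -> R) : R :=
  match N with O => 0 | S n => fsum n g + g n end.
Fixpoint fprod (N : nat) (g : nat -> R) : R :=
  match N with O => 1 | S n => fprod n g * g n end.

(* msum m N f = sum of f J over all multi-indices J = (J 0, ..., J (m-1))
   with each J i in {0,...,N-1}. *)
Definition ncons (j : nat) (J : nat -> nat) : nat -> nat :=
  fun i => match i with O => j | S i' => J i' end.
Fixpoint msum (m N : nat) (f : (nat -> nat) -> R) : R :=
  match m with
  | O => f (fun _ => O)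
  | S m' => fsum N (fun j => msum m' N (fun J => f (ncons j J)))
  end.

Record BanachSpace := {
  carrier :> Type;
  vzero : carrier;
  vadd : carrier -> carrier -> carrier;
  vscal : R -> carrier -> carrier;
  vnorm : carrier -> R;
  vadd_assoc : forall x y z, vadd x (vadd y z) = vadd (vadd x y) z;
  vadd_comm : forall x y, vadd x y = vadd y x;
  vadd_zero : forall x, vadd x vzero = x;
  vadd_opp : forall x, vadd x (vscal (-1) x) = vzero;
  vscal_one : forall x, vscal 1 x = x;
  vscal_assoc : forall a b x, vscal a (vscal b x) = vscal (a * b) x;
  vscal_addv : forall a x y, vscal a (vadd x y) = vadd (vscal a x) (vscal a y);
  vscal_adds : forall a b x, vscal (a + b) x = vadd (vscal a x) (vscal b x);
  vnorm_nonneg : forall x, 0 <= vnorm x;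
  vnorm_eq0 : forall x, vnorm x = 0 -> x = vzero;
  vnorm_scal : forall a x, vnorm (vscal a x) = Rabs a * vnorm x;
  vnorm_triangle : forall x y, vnorm (vadd x y) <= vnorm x + vnorm y;
  vcomplete : forall u : nat -> carrier,
    (forall eps, 0 < eps -> exists N, forall n p, (N <= n)%nat -> (N <= p)%nat ->
        vnorm (vadd (u n) (vscal (-1) (u p))) < eps) ->
    exists l, forall eps, 0 < eps -> exists N, forall n, (N <= n)%nat ->
        vnorm (vadd (u n) (vscal (-1) l)) < eps
}.

Arguments vzero {_}. Arguments vadd {_}. Arguments vscal {_}. Arguments vnorm {_}.

Definition upd {X : Type} (x : nat -> X) (i : nat) (v : X) : nat -> X :=
  fun j => if Nat.eqb j i then v else x j.

(* m-linear forms A : X^m -> R, arguments given as x : nat -> X of which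
   only x 0, ..., x (m-1) matter. *)
Definition only_first (X : BanachSpace) (m : nat) (A : (nat -> X) -> R) : Prop :=
  forall x y : nat -> X, (forall i, (i < m)%nat -> x i = y i) -> A x = A y.

Definition multilinear (X : BanachSpace) (m : nat) (A : (nat -> X) -> R) : Prop :=
  forall (x : nat -> X) (i : nat), (i < m)%nat ->
  forall (a : R) (u v : X),
    A (upd x i (vadd (vscal a u) v)) = a * A (upd x i u) + A (upd x i v).

Definition is_perm (m : nat) (s : nat -> nat) : Prop :=
  (forall i, (i < m)%nat -> (s i < m)%nat) /\
  (forall i j, (i < m)%nat -> (j < m)%nat -> s i = s j -> i = j).

Definition symmetric (X : BanachSpace) (m : nat) (A : (nat -> X) -> R) : Prop :=
  forall (s : nat -> nat) (x : nat -> X), is_perm m s -> A (fun i => x (s i)) = A x.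

Definition bounded_form (X : BanachSpace) (m : nat) (A : (nat -> X) -> R) : Prop :=
  exists C, forall x : nat -> X, Rabs (A x) <= C * fprod m (fun i => vnorm (x i)).

(* A continuous symmetric m-linear form; it is the polar of the continuous
   m-homogeneous polynomial P x = A (x,...,x), and every such P arises this way
   from exactly one such A. *)
Definition sym_form (X : BanachSpace) (m : nat) (A : (nat -> X) -> R) : Prop :=
  only_first X m A /\ multilinear X m A /\ symmetric X m A /\ bounded_form X m A.

Definition diag {X : Type} (x : X) : nat -> X := fun _ => x.

Definition is_poly_norm (X : BanachSpace) (m : nat) (A : (nat -> X) -> R) (nP : R) : Prop :=
  is_lub (fun r => exists x : X, vnorm x <= 1 /\ r = Rabs (A (diag x))) nP.

Definition dual_unit (X : BanachSpace) (phi : X -> R) : Prop :=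
  (forall (a : R) (u v : X), phi (vadd (vscal a u) v) = a * phi u + phi v) /\
  (forall x, Rabs (phi x) <= vnorm x).

Definition is_weak1_norm (X : BanachSpace) (N : nat) (x : nat -> X) (w : R) : Prop :=
  is_lub (fun r => exists phi, dual_unit X phi /\ r = fsum N (fun j => Rabs (phi (x j)))) w.

(* L is an admissible constant in the definition of L_{R,m};
   xs k j = x^{(k+1)}_{j+1}. *)
Definition admissible (m : nat) (L : R) : Prop :=
  forall (X : BanachSpace) (A : (nat -> X) -> R) (N : nat) (xs : nat -> nat -> X)
         (nP : R) (w : nat -> R),
    sym_form X m A ->
    is_poly_norm X m A nP ->
    (forall k, (k < m)%nat -> is_weak1_norm X N (xs k) (w k)) ->
    rpow (msum m N (fun J => rpow (Rabs (A (fun i => xs i (J i))))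
                                  (2 * INR m / (INR m + 1))))
         ((INR m + 1) / (2 * INR m))
    <= L * nP * fprod m w.

Definition gfun (t : R) : R :=
  rpow (2 * rpow t (4/3) + 2 * rpow (sqrt (t * (1 - t))) (4/3)) (3/4).

Definition Acoef (k : nat) (t0 : R) (j : nat) : R :=
  fsum (Nat.div j 2 + 1) (fun l =>
    if Nat.leb j (k + l) then
      INR (fact k) * (-1) ^ (k + l - j) * t0 ^ (k + 2 * l - j)
      * (2 * sqrt (t0 * (1 - t0))) ^ (j - 2 * l)
      / (INR (fact l) * INR (fact (j - 2 * l)) * INR (fact (k + l - j)))
    else 0).

Definition lower_bound (k : nat) (t0 : R) : R :=
  rpow (fsum (2 * k + 1) (fun j =>
          C (2 * k) j * rpow (Rabs (Acoef k t0 j / C (2 * k) j))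
                             (4 * INR k / (2 * INR k + 1))))
       ((2 * INR k + 1) / (4 * INR k)).

(* Main.v *)
Require Import Defs.
From Stdlib Require Import Reals Lra Lia Arith Classical FunctionalExtensionality.
Open Scope R_scope.

Lemma fsum_ext : forall N f g, (forall i, (i < N)%nat -> f i = g i) -> fsum N f = fsum N g.
Proof. induction N; intros f g H; simpl; auto. rewrite (IHN f g); [rewrite H|]; auto; intros; apply H; lia. Qed.

Lemma fsum_plus : forall N f g, fsum N (fun i => f i + g i) = fsum N f + fsum N g.
Proof. induction N; intros; simpl; [ring| rewrite IHN; ring]. Qed.

Lemma fsum_scal : forall N a f, fsum N (fun i => a * f i) = a * fsum N f.
Proof. induction N; intros; simpl; [ring| rewrite IHN; ring]. Qed.

Lemma fsum_scal_r : forall N a f, fsum N (fun i => f i * a) = fsum N f * a.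
Proof. induction N; intros; simpl; [ring| rewrite IHN; ring]. Qed.

Lemma fsum_zero : forall N f, (forall i, (i < N)%nat -> f i = 0) -> fsum N f = 0.
Proof. intros. rewrite (fsum_ext N f (fun _ => 0)) by auto. clear. induction N; simpl; lra. Qed.

Lemma fsum_shift : forall N f, fsum (S N) f = f 0%nat + fsum N (fun i => f (S i)).
Proof. induction N; intros; simpl in *; [ring|]. rewrite IHN. simpl. ring. Qed.

Lemma fsum_split : forall a b f, fsum (a + b) f = fsum a f + fsum b (fun i => f (a + i)%nat).
Proof. intros a b; induction b; intros; simpl. rewrite Nat.add_0_r; ring.
  rewrite Nat.add_succ_r; simpl; rewrite IHb; ring. Qed.

Lemma fsum_abs : forall N f, Rabs (fsum N f) <= fsum N (fun i => Rabs (f i)).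
Proof. induction N; intros; simpl. rewrite Rabs_R0; lra.
  eapply Rle_trans; [apply Rabs_triang|]. specialize (IHN f); lra. Qed.

Lemma fsum_le : forall N f g, (forall i, (i < N)%nat -> f i <= g i) -> fsum N f <= fsum N g.
Proof. induction N; intros; simpl. lra. apply Rplus_le_compat; [apply IHN; intros; apply H; lia| apply H; lia]. Qed.

Lemma fsum_swap : forall N M f, fsum N (fun i => fsum M (fun j => f i j)) = fsum M (fun j => fsum N (fun i => f i j)).
Proof. induction N; intros; simpl. symmetry; apply fsum_zero; auto.
  rewrite IHN, <- fsum_plus. reflexivity. Qed.

Lemma fsum_delta : forall N c g, (c < N)%nat -> fsum N (fun j => if Nat.eqb j c then g j else 0) = g c.
Proof. induction N; intros; [lia|]. simpl. destruct (Nat.eq_dec c N).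
  subst. rewrite Nat.eqb_refl. rewrite fsum_zero; [ring|]. intros i Hi. destruct (Nat.eqb_spec i N); [lia|auto].
  rewrite IHN by lia. destruct (Nat.eqb_spec N c); [lia|ring]. Qed.

Lemma fsum_extend : forall n N h h', (n <= N)%nat -> (forall l, (l < n)%nat -> h' l = h l) ->
  (forall l, (n <= l < N)%nat -> h' l = 0) -> fsum n h = fsum N h'.
Proof. intros. replace N with (n + (N - n))%nat by lia. rewrite fsum_split.
  rewrite (fsum_zero (N - n)). rewrite Rplus_0_r. apply fsum_ext; intros; symmetry; auto.
  intros; apply H1; lia. Qed.

Lemma fsum_interval : forall N a n f, (a + n <= N)%nat ->
  fsum N (fun j => if andb (Nat.leb a j) (Nat.ltb j (a + n)) then f j else 0) = fsum n (fun g => f (a + g)%nat).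
Proof. intros. replace N with (a + (n + (N - a - n)))%nat by lia.
  rewrite fsum_split, fsum_split. rewrite fsum_zero, (fsum_zero (N - a - n)). 2,3: intros i Hi;
  match goal with |- context [Nat.leb ?x ?y] => destruct (Nat.leb_spec x y) end;
  match goal with |- context [Nat.ltb ?x ?y] => destruct (Nat.ltb_spec x y) end; simpl; auto; lia.
  rewrite Rplus_0_l, Rplus_0_r. apply fsum_ext; intros.
  destruct (Nat.leb_spec a (a+i)); [|lia]. destruct (Nat.ltb_spec (a+i) (a+n)); [|lia]. reflexivity. Qed.

Definition R2 := (R * R)%type.
Definition v2add (p q : R2) : R2 := (fst p + fst q, snd p + snd q).
Definition v2scal (a : R) (p : R2) : R2 := (a * fst p, a * snd p).
Definition v2norm (p : R2) : R := Rmax (Rabs (fst p)) (Rabs (snd p)).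

Lemma pair_eq : forall a b c d : R, a = c -> b = d -> (a, b) = (c, d).
Proof. intros; subst; auto. Qed.

Lemma v2complete : forall u : nat -> R2,
    (forall eps, 0 < eps -> exists N, forall n p, (N <= n)%nat -> (N <= p)%nat ->
        v2norm (v2add (u n) (v2scal (-1) (u p))) < eps) ->
    exists l, forall eps, 0 < eps -> exists N, forall n, (N <= n)%nat ->
        v2norm (v2add (u n) (v2scal (-1) l)) < eps.
Proof.
  intros u H.
  assert (C1 : Cauchy_crit (fun n => fst (u n))).
  { intros e He. destruct (H e He) as [N HN]. exists N. intros n p Hn Hp.
    specialize (HN n p Hn Hp). unfold v2norm, v2add, v2scal, Rdist in *; simpl in *.
    eapply Rle_lt_trans; [|exact HN]. replace (fst (u n) + -1 * fst (u p)) with (fst (u n) - fst (u p)) by ring. apply Rmax_l. }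
  assert (C2 : Cauchy_crit (fun n => snd (u n))).
  { intros e He. destruct (H e He) as [N HN]. exists N. intros n p Hn Hp.
    specialize (HN n p Hn Hp). unfold v2norm, v2add, v2scal, Rdist in *; simpl in *.
    eapply Rle_lt_trans; [|exact HN]. replace (snd (u n) + -1 * snd (u p)) with (snd (u n) - snd (u p)) by ring. apply Rmax_r. }
  destruct (R_complete _ C1) as [l1 H1]. destruct (R_complete _ C2) as [l2 H2].
  exists (l1, l2). intros e He. destruct (H1 e He) as [N1 HN1]. destruct (H2 e He) as [N2 HN2].
  exists (max N1 N2). intros n Hn. unfold v2norm, v2add, v2scal; simpl.
  apply Rmax_lub_lt.
  - replace (fst (u n) + -1 * l1) with (fst (u n) - l1) by ring. apply HN1; lia.
  - replace (snd (u n) + -1 * l2) with (snd (u n) - l2) by ring. apply HN2; lia.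
Qed.

Definition R2space : BanachSpace.
Proof.
  refine {| carrier := R2; vzero := (0, 0); vadd := v2add; vscal := v2scal; vnorm := v2norm;
            vcomplete := v2complete |}.
  - intros [] [] []; unfold v2add; simpl; apply pair_eq; ring.
  - intros [] []; unfold v2add; simpl; apply pair_eq; ring.
  - intros []; unfold v2add; simpl; apply pair_eq; ring.
  - intros []; unfold v2add, v2scal; simpl; apply pair_eq; ring.
  - intros []; unfold v2scal; simpl; apply pair_eq; ring.
  - intros a b []; unfold v2scal; simpl; apply pair_eq; ring.
  - intros a [] []; unfold v2add, v2scal; simpl; apply pair_eq; ring.
  - intros a b []; unfold v2add, v2scal; simpl; apply pair_eq; ring.
  - intros []; unfold v2norm; simpl. eapply Rle_trans; [apply Rabs_pos|apply Rmax_l].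
  - intros [a b]; unfold v2norm; simpl. intros H.
    assert (Rabs a <= 0) by (rewrite <- H; apply Rmax_l).
    assert (Rabs b <= 0) by (rewrite <- H; apply Rmax_r).
    pose proof (Rabs_pos a); pose proof (Rabs_pos b).
    apply pair_eq; [destruct (Req_dec a 0)|destruct (Req_dec b 0)]; auto;
    [pose proof (Rabs_pos_lt a H4)|pose proof (Rabs_pos_lt b H4)]; lra.
  - intros a []; unfold v2norm, v2scal; simpl. rewrite !Rabs_mult.
    apply RmaxRmult. apply Rabs_pos.
  - intros [a b] [c d]; unfold v2norm, v2add; simpl.
    apply Rmax_lub; (eapply Rle_trans; [apply Rabs_triang|]);
    apply Rplus_le_compat; first [apply Rmax_l | apply Rmax_r].
Defined.

Section Fold.
Variables (T U : Type) (op : T -> U -> T) (c0 : T).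
Hypothesis op_comm : forall c u w, op (op c u) w = op (op c w) u.
Fixpoint foldop (m : nat) (v : nat -> U) : T :=
  match m with O => c0 | S m' => op (foldop m' v) (v m') end.

Lemma foldop_ext : forall m v w, (forall i, (i < m)%nat -> v i = w i) -> foldop m v = foldop m w.
Proof. induction m; intros; simpl; auto. rewrite (IHm v w), H; auto. Qed.

Lemma foldop_exch : forall m w p x, (p < m)%nat ->
  op (foldop m w) x = op (foldop m (upd w p x)) (w p).
Proof.
  induction m; intros w p x Hp; [lia|]. simpl.
  destruct (Nat.eq_dec p m).
  - subst. unfold upd at 2. rewrite Nat.eqb_refl.
    rewrite (foldop_ext m (upd w m x) w). apply op_comm.
    intros i Hi; unfold upd; destruct (Nat.eqb_spec i m); auto; lia.
  - rewrite op_comm. rewrite (IHm w p x) by lia. rewrite op_comm.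
    unfold upd at 3. destruct (Nat.eqb_spec m p); [lia|]. reflexivity.
Qed.

Lemma pigeon : forall n f, (forall i, (i < S n)%nat -> (f i < n)%nat) ->
  (forall i j, (i < S n)%nat -> (j < S n)%nat -> f i = f j -> i = j) -> False.
Proof.
  induction n; intros f H1 H2. specialize (H1 0%nat); lia.
  set (g := fun i => if Nat.eqb (f i) n then f (S n) else f i).
  apply (IHn g).
  - intros i Hi. unfold g. destruct (Nat.eqb_spec (f i) n).
    + assert (f (S n) <> n). { intro. assert (i = S n) by (apply H2; lia). lia. }
      specialize (H1 (S n)); lia.
    + specialize (H1 i); lia.
  - intros i j Hi Hj. unfold g. destruct (Nat.eqb_spec (f i) n), (Nat.eqb_spec (f j) n).
    + intros; apply H2; lia.
    + intros; assert (S n = j) by (apply H2; lia); lia.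
    + intros; assert (i = S n) by (apply H2; lia); lia.
    + intros; apply H2; lia.
Qed.

Lemma perm_surj : forall n s, is_perm (S n) s -> exists p, (p < S n)%nat /\ s p = n.
Proof.
  intros n s [H1 H2]. apply NNPP; intro Hn.
  apply (pigeon n s); auto.
  intros i Hi. specialize (H1 i Hi). destruct (Nat.eq_dec (s i) n); [|lia].
  exfalso; apply Hn; exists i; auto.
Qed.

Lemma foldop_perm : forall m s v, is_perm m s -> foldop m (fun i => v (s i)) = foldop m v.
Proof.
  induction m; intros s v Hs; simpl; auto.
  destruct (perm_surj m s Hs) as [p [Hp Hsp]]. destruct Hs as [H1 H2].
  destruct (Nat.eq_dec p m).
  - subst p. rewrite Hsp. f_equal. apply IHm. split.
    + intros i Hi. assert (s i <> m). { intro. assert (i = m) by (apply H2; lia). lia. }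
      specialize (H1 i); lia.
    + intros; apply H2; lia.
  - rewrite (foldop_exch m (fun i => v (s i)) p (v (s m))) by lia.
    rewrite Hsp.
    set (s' := fun i => if Nat.eqb i p then s m else s i).
    assert (Hs' : is_perm m s').
    { split.
      - intros i Hi. unfold s'. destruct (Nat.eqb_spec i p).
        + assert (s m <> m). { intro. assert (p = m) by (apply H2; lia). lia. }
          specialize (H1 m); lia.
        + assert (s i <> m). { intro. assert (i = p) by (apply H2; lia). lia. }
          specialize (H1 i); lia.
      - intros i j Hi Hj. unfold s'. destruct (Nat.eqb_spec i p), (Nat.eqb_spec j p).
        + lia.
        + intro. assert (m = j) by (apply H2; lia). lia.
        + intro. assert (i = m) by (apply H2; lia). lia.
        + intro; apply H2; lia. }
    rewrite (foldop_ext m _ (fun i => v (s' i))).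
    + rewrite IHm; auto.
    + intros i Hi. unfold upd, s'. destruct (Nat.eqb_spec i p); auto.
Qed.
End Fold.

Definition mulfac (c : nat -> R) (u : R2) : nat -> R :=
  fun j => match j with O => snd u * c O | S j' => fst u * c j' + snd u * c (S j') end.
Definition cp0 : nat -> R := fun j => match j with O => 1 | _ => 0 end.
Definition cp (m : nat) (v : nat -> R2) : nat -> R := foldop _ _ mulfac cp0 m v.

Lemma mulfac_comm : forall c u w, mulfac (mulfac c u) w = mulfac (mulfac c w) u.
Proof. intros c u w. apply functional_extensionality. intros [|[|j]]; unfold mulfac; simpl; ring. Qed.

Lemma cp_perm : forall m s v, is_perm m s -> cp m (fun i => v (s i)) = cp m v.
Proof. intros; unfold cp; apply foldop_perm; auto. apply mulfac_comm. Qed.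

Lemma cp_ext : forall m v w, (forall i, (i < m)%nat -> v i = w i) -> cp m v = cp m w.
Proof. intros; unfold cp; apply foldop_ext; auto. Qed.

Lemma cp_S : forall m v, cp (S m) v = mulfac (cp m v) (v m).
Proof. reflexivity. Qed.

Lemma cp_lin : forall m v i, (i < m)%nat -> forall a u w j,
  cp m (upd v i (v2add (v2scal a u) w)) j = a * cp m (upd v i u) j + cp m (upd v i w) j.
Proof.
  induction m; intros v i Hi a u w j; [lia|]. rewrite !cp_S.
  destruct (Nat.eq_dec i m).
  - subst. unfold upd at 2 4 6. rewrite !Nat.eqb_refl.
    rewrite !(cp_ext m (upd v m _) v) by (intros k Hk; unfold upd; destruct (Nat.eqb_spec k m); auto; lia).
    destruct j; unfold mulfac, v2add, v2scal; simpl; ring.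
  - unfold upd at 2 4 6. destruct (Nat.eqb_spec m i); [lia|].
    destruct j; unfold mulfac; rewrite ?IHm by lia; ring.
Qed.

Lemma cp_big : forall m v j, (m < j)%nat -> cp m v j = 0.
Proof. induction m; intros v j Hj. destruct j; [lia|reflexivity].
  rewrite cp_S. destruct j; [lia|]. unfold mulfac. rewrite !IHm by lia. ring. Qed.

Lemma fprod_nonneg : forall m g, (forall i, 0 <= g i) -> 0 <= fprod m g.
Proof. induction m; intros; simpl. lra. apply Rmult_le_pos; auto. Qed.

Lemma cp_bound : forall m v j, Rabs (cp m v j) <= 2 ^ m * fprod m (fun i => v2norm (v i)).
Proof.
  induction m; intros v j. destruct j; simpl; rewrite ?Rabs_R1, ?Rabs_R0; lra.
  rewrite cp_S. simpl fprod. simpl pow.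
  assert (Hn : 0 <= v2norm (v m)) by (unfold v2norm; eapply Rle_trans; [apply Rabs_pos|apply Rmax_l]).
  assert (Ha : Rabs (fst (v m)) <= v2norm (v m)) by apply Rmax_l.
  assert (Hb : Rabs (snd (v m)) <= v2norm (v m)) by apply Rmax_r.
  assert (HP : 0 <= 2 ^ m * fprod m (fun i => v2norm (v i))).
  { apply Rmult_le_pos. apply pow_le; lra. apply fprod_nonneg. intros; unfold v2norm; eapply Rle_trans; [apply Rabs_pos|apply Rmax_l]. }
  set (P := 2 ^ m * fprod m (fun i => v2norm (v i))) in *.
  destruct j; unfold mulfac.
  - rewrite Rabs_mult. pose proof (IHm v 0%nat).
    assert (Rabs (snd (v m)) * Rabs (cp m v 0) <= v2norm (v m) * P) by (apply Rmult_le_compat; auto using Rabs_pos).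
    replace (2 * 2 ^ m * (fprod m (fun i => v2norm (v i)) * v2norm (v m))) with (2 * (v2norm (v m) * P)) by (unfold P; ring); nra.
  - eapply Rle_trans; [apply Rabs_triang|]. rewrite !Rabs_mult.
    pose proof (IHm v j). pose proof (IHm v (S j)).
    assert (Rabs (fst (v m)) * Rabs (cp m v j) <= v2norm (v m) * P) by (apply Rmult_le_compat; auto using Rabs_pos).
    assert (Rabs (snd (v m)) * Rabs (cp m v (S j)) <= v2norm (v m) * P) by (apply Rmult_le_compat; auto using Rabs_pos).
    replace (2 * 2 ^ m * (fprod m (fun i => v2norm (v i)) * v2norm (v m))) with (2 * (v2norm (v m) * P)) by (unfold P; ring); nra.
Qed.

Definition Aform (m : nat) (F : nat -> R) (v : nat -> R2space) : R :=
  fsum (S m) (fun j => F j * cp m v j).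

Lemma Aform_sym : forall m F, sym_form R2space m (Aform m F).
Proof.
  intros m F. split; [|split; [|split]].
  - intros x y H. unfold Aform. rewrite (cp_ext m x y); auto.
  - intros x i Hi a u v. unfold Aform. rewrite <- fsum_scal, <- fsum_plus.
    apply fsum_ext; intros j _. change (@vadd R2space) with v2add. change (@vscal R2space) with v2scal. transitivity (F j * (a * cp m (upd x i u) j + cp m (upd x i v) j)); [f_equal; exact (cp_lin m x i Hi a u v j)|ring].
  - intros s x Hs. unfold Aform. rewrite cp_perm; auto.
  - exists (2 ^ m * fsum (S m) (fun j => Rabs (F j))). intros x.
    unfold Aform. eapply Rle_trans; [apply fsum_abs|].
    replace (2 ^ m * fsum (S m) (fun j => Rabs (F j)) * fprod m (fun i => vnorm (x i)))
      with (fsum (S m) (fun j => Rabs (F j) * (2 ^ m * fprod m (fun i => v2norm (x i)))))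
      by (rewrite fsum_scal_r; reflexivity || (simpl; ring)).
    apply fsum_le; intros j _. simpl. rewrite Rabs_mult.
    apply Rmult_le_compat_l; [apply Rabs_pos|]. apply cp_bound.
Qed.

Definition ev (j : nat) : R2space := if Nat.eqb j 0 then (1, 0) else (0, 1).
Fixpoint cnt (m : nat) (J : nat -> nat) : nat :=
  match m with O => O | S m' => (cnt m' J + if Nat.eqb (J m') 0 then 1 else 0)%nat end.

Lemma cnt_le : forall m J, (cnt m J <= m)%nat.
Proof. induction m; intros; simpl; auto. specialize (IHm J). destruct (Nat.eqb _ _); lia. Qed.

Lemma cp_ev : forall m J j, cp m (fun i => ev (J i)) j = if Nat.eqb j (cnt m J) then 1 else 0.
Proof.
  induction m; intros J j. destruct j; reflexivity.
  rewrite cp_S. simpl cnt. unfold ev at 2. destruct (Nat.eqb_spec (J m) 0).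
  - destruct j; unfold mulfac; simpl fst; simpl snd; rewrite ?IHm.
    + destruct (cnt m J); simpl; ring.
    + replace (cnt m J + 1)%nat with (S (cnt m J)) by lia. simpl.
      destruct (Nat.eqb j (cnt m J)); ring.
  - destruct j; unfold mulfac; simpl fst; simpl snd; rewrite ?IHm; rewrite Nat.add_0_r; ring.
Qed.

Lemma Aform_ev : forall m F J, Aform m F (fun i => ev (J i)) = F (cnt m J).
Proof.
  intros. unfold Aform.
  rewrite (fsum_ext _ _ (fun j => if Nat.eqb j (cnt m J) then F j else 0)).
  apply fsum_delta. pose proof (cnt_le m J); lia.
  intros j _. rewrite cp_ev. destruct (Nat.eqb _ _); ring.
Qed.

Lemma msum_ext : forall m N f g, (forall J, f J = g J) -> msum m N f = msum m N g.
Proof. induction m; intros; simpl; auto. apply fsum_ext; intros; apply IHm; auto. Qed.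

Lemma cnt_ncons : forall m j J, cnt (S m) (ncons j J) = ((if Nat.eqb j 0 then 1 else 0) + cnt m J)%nat.
Proof.
  assert (G : forall m J, cnt (S m) J = ((if Nat.eqb (J 0%nat) 0 then 1 else 0) + cnt m (fun i => J (S i)))%nat).
  { induction m; intros J; simpl. lia. simpl in IHm. rewrite IHm. lia. }
  intros. rewrite G. reflexivity.
Qed.

Lemma C_n0 : forall n, C n 0 = 1.
Proof. intros; unfold C; rewrite Nat.sub_0_r; simpl; field; apply INR_fact_neq_0. Qed.
Lemma C_nn : forall n, C n n = 1.
Proof. intros; unfold C; rewrite Nat.sub_diag; simpl; field; apply INR_fact_neq_0. Qed.

Lemma msum_cnt : forall m g, msum m 2 (fun J => g (cnt m J)) = fsum (S m) (fun j => C m j * g j).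
Proof.
  induction m; intros g. simpl. rewrite C_n0. ring.
  change (msum (S m) 2 (fun J => g (cnt (S m) J))) with (fsum 2 (fun j => msum m 2 (fun J => g (cnt (S m) (ncons j J))))).
  rewrite (fsum_ext 2 _ (fun j => msum m 2 (fun J => g (((if Nat.eqb j 0 then 1 else 0) + cnt m J)%nat))))
    by (intros; apply msum_ext; intros; rewrite cnt_ncons; reflexivity).
  change (fsum 2 ?f) with (0 + f 0%nat + f 1%nat). cbv beta. simpl Nat.eqb. cbv iota. simpl Nat.add.
  rewrite (IHm (fun j => g (S j))), IHm.
  rewrite (fsum_shift (S m)), (fsum_shift m (fun j => C m j * g j)).
  change (fsum (S m) (fun i => C (S m) (S i) * g (S i))) with
    (fsum m (fun i => C (S m) (S i) * g (S i)) + C (S m) (S m) * g (S m)).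
  change (fsum (S m) (fun j => C m j * g (S j))) with
    (fsum m (fun j => C m j * g (S j)) + C m m * g (S m)).
  rewrite !C_n0, !C_nn.
  rewrite (fsum_ext m (fun i => C (S m) (S i) * g (S i)) (fun i => C m i * g (S i) + C m (S i) * g (S i))).
  rewrite fsum_plus. ring.
  intros i Hi. rewrite <- pascal by auto. ring.
Qed.

Lemma cp_diag : forall m a b j, (j <= m)%nat -> cp m (diag ((a, b) : R2)) j = C m j * a ^ j * b ^ (m - j).
Proof.
  induction m; intros a b j Hj.
  - assert (j = 0%nat) by lia; subst. simpl. rewrite C_n0. ring.
  - rewrite cp_S. unfold diag at 2. destruct j; unfold mulfac; simpl fst; simpl snd.
    + rewrite IHm by lia. rewrite !Nat.sub_0_r, !C_n0. simpl. ring.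
    + destruct (Nat.eq_dec j m).
      * subst. rewrite (cp_big m _ (S m)) by lia. rewrite IHm by lia. rewrite !C_nn, Nat.sub_diag. simpl. rewrite Nat.sub_diag. simpl. ring.
      * rewrite !IHm by lia. rewrite <- pascal by lia.
        simpl. replace (m - j)%nat with (S (m - S j)) by lia. simpl. ring.
Qed.

Definition Acoef' (k : nat) (t0 d : R) (j : nat) : R :=
  fsum (Nat.div j 2 + 1) (fun l =>
    if Nat.leb j (k + l) then
      INR (fact k) * (-1) ^ (k + l - j) * t0 ^ (k + 2 * l - j)
      * d ^ (j - 2 * l)
      / (INR (fact l) * INR (fact (j - 2 * l)) * INR (fact (k + l - j)))
    else 0).

Lemma sum_f_R0_fsum : forall f n, sum_f_R0 f n = fsum (S n) f.
Proof. induction n; simpl; [ring|rewrite IHn; reflexivity]. Qed.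

Lemma div2_le : forall j l, (l < Nat.div j 2 + 1)%nat <-> (2 * l <= j)%nat.
Proof. intros. pose proof (Nat.div_mod j 2). pose proof (Nat.mod_upper_bound j 2).
  set (q := Nat.div j 2) in *. set (r := Nat.modulo j 2) in *. lia. Qed.

Lemma trinom : forall k t d a b,
  fsum (2 * k + 1) (fun j => Acoef' k t d j * a ^ j * b ^ (2 * k - j)) =
  (t * a ^ 2 + (d * a * b + (-1) * t * b ^ 2)) ^ k.
Proof.
  intros k t d a b.
  set (W := fun j l => (if Nat.leb j (k + l) then
      INR (fact k) * (-1) ^ (k + l - j) * t ^ (k + 2 * l - j) * d ^ (j - 2 * l)
      / (INR (fact l) * INR (fact (j - 2 * l)) * INR (fact (k + l - j))) else 0) * a ^ j * b ^ (2 * k - j)).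
  rewrite (fsum_ext _ _ (fun j => fsum (2 * k + 1) (fun l => if Nat.leb (2 * l) j then W j l else 0))).
  2:{ intros j Hj. unfold Acoef'. rewrite <- fsum_scal_r, <- fsum_scal_r. apply fsum_extend.
      - pose proof (Nat.div_le_upper_bound j 2 j). lia.
      - intros l Hl. apply div2_le in Hl. destruct (Nat.leb_spec (2 * l) j); [|lia]. reflexivity.
      - intros l Hl. destruct (Nat.leb_spec (2 * l) j); [|reflexivity].
        assert (l < Nat.div j 2 + 1)%nat by (apply div2_le; lia). lia. }
  rewrite fsum_swap.
  rewrite (fsum_ext _ _ (fun l => if Nat.leb l k then fsum (k - l + 1) (fun g => W (2 * l + g)%nat l) else 0)).
  2:{ intros l Hl. destruct (Nat.leb_spec l k).
      - rewrite <- (fsum_interval (2*k+1) (2*l) (k-l+1) (fun j => W j l)) by lia. apply fsum_ext; intros j Hj.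
        destruct (Nat.leb_spec (2 * l) j), (Nat.ltb_spec j (2 * l + (k - l + 1))); simpl; auto.
        unfold W. destruct (Nat.leb_spec j (k + l)); [lia|ring].
      - apply fsum_zero. intros j Hj. destruct (Nat.leb_spec (2 * l) j); auto.
        unfold W. destruct (Nat.leb_spec j (k + l)); [lia|ring]. }
  rewrite binomial, sum_f_R0_fsum.
  symmetry. apply fsum_extend; [lia| |].
  2:{ intros l Hl. destruct (Nat.leb_spec l k); [lia|reflexivity]. }
  intros l Hl. destruct (Nat.leb_spec l k); [|lia].
  rewrite binomial, sum_f_R0_fsum. rewrite <- fsum_scal. replace (k - l + 1)%nat with (S (k - l)) by lia.
  apply fsum_ext. intros g Hg. unfold W.
  destruct (Nat.leb_spec (2 * l + g) (k + l)); [|lia].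
  set (r := (k - l - g)%nat).
  replace (k + l - (2 * l + g))%nat with r by lia.
  replace (k + 2 * l - (2 * l + g))%nat with (l + r)%nat by lia.
  replace (2 * l + g - 2 * l)%nat with g by lia.
  replace (2 * k - (2 * l + g))%nat with (g + 2 * r)%nat by lia.
  unfold C. replace (k - l)%nat with (g + r)%nat by lia. replace (g + r - g)%nat with r by lia.
  rewrite !pow_add, !pow_mult, !Rpow_mult_distr.
  pose proof (INR_fact_neq_0 k). pose proof (INR_fact_neq_0 l). pose proof (INR_fact_neq_0 g).
  pose proof (INR_fact_neq_0 r). pose proof (INR_fact_neq_0 (g + r)).
  field. auto.
Qed.

Lemma rpow_nonneg : forall x p, 0 <= rpow x p.
Proof. intros; unfold rpow; destruct (Rlt_dec 0 x); [unfold Rpower; apply Rlt_le, exp_pos|lra]. Qed.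

Lemma fprod_one : forall m, fprod m (fun _ => 1) = 1.
Proof. induction m; simpl; [|rewrite IHm]; ring. Qed.

Lemma pow_le1 : forall x n, 0 <= x <= 1 -> x ^ n <= 1.
Proof. intros x n H; induction n; simpl; [lra|]. pose proof (pow_le x n (proj1 H)). nra. Qed.

Lemma abs_le1 : forall a, Rabs a <= 1 -> a * a <= 1.
Proof. intros a H. unfold Rabs in H; destruct (Rcase_abs a); nra. Qed.

Lemma norm_le1 : forall a b, Rabs a <= 1 -> Rabs b <= 1 -> v2norm (a, b) <= 1.
Proof. intros; unfold v2norm; simpl; apply Rmax_lub; auto. Qed.

Lemma dual_lin : forall phi, dual_unit R2space phi ->
  forall a b, phi ((a, b) : R2space) = a * phi ((1, 0) : R2space) + b * phi ((0, 1) : R2space).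
Proof.
  intros phi [Hl _] a b.
  assert (H0 : phi ((0, 0) : R2space) = 0).
  { pose proof (Hl 1 ((0,0):R2space) ((0,0):R2space)) as E.
    replace (vadd (vscal 1 ((0,0):R2space)) ((0,0):R2space)) with ((0,0):R2space) in E
      by (simpl; unfold v2add, v2scal; simpl; apply pair_eq; ring). lra. }
  pose proof (Hl b ((0,1):R2space) ((0,0):R2space)) as E2.
  replace (vadd (vscal b ((0,1):R2space)) ((0,0):R2space)) with ((0,b):R2space) in E2
    by (simpl; unfold v2add, v2scal; simpl; apply pair_eq; ring).
  pose proof (Hl a ((1,0):R2space) ((0,b):R2space)) as E1.
  replace (vadd (vscal a ((1,0):R2space)) ((0,b):R2space)) with ((a,b):R2space) in E1
    by (simpl; unfold v2add, v2scal; simpl; apply pair_eq; ring).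
  lra.
Qed.

Lemma weak_ev : is_weak1_norm R2space 2 (fun j => ev j) 1.
Proof.
  split.
  - intros r [phi [Hphi ->]]. simpl. unfold ev; simpl.
    pose proof (dual_lin phi Hphi) as HL. destruct Hphi as [_ Hb].
    set (p1 := phi ((1,0):R2space)) in *. set (p2 := phi ((0,1):R2space)) in *.
    assert (G : forall s1 s2, Rabs s1 <= 1 -> Rabs s2 <= 1 -> s1 * p1 + s2 * p2 <= 1).
    { intros s1 s2 H1 H2. rewrite <- HL. eapply Rle_trans; [apply Rle_abs|].
      eapply Rle_trans; [apply Hb|]. apply norm_le1; auto. }
    assert (R1 : Rabs 1 <= 1) by (rewrite Rabs_R1; lra).
    assert (R2' : Rabs (-1) <= 1) by (unfold Rabs; destruct (Rcase_abs (-1)); lra).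
    destruct (Rle_dec 0 p1), (Rle_dec 0 p2).
    + rewrite (Rabs_pos_eq p1), (Rabs_pos_eq p2) by lra. specialize (G 1 1 R1 R1). lra.
    + rewrite (Rabs_pos_eq p1), (Rabs_left1 p2) by lra. specialize (G 1 (-1) R1 R2'). lra.
    + rewrite (Rabs_left1 p1), (Rabs_pos_eq p2) by lra. specialize (G (-1) 1 R2' R1). lra.
    + rewrite (Rabs_left1 p1), (Rabs_left1 p2) by lra. specialize (G (-1) (-1) R2' R2'). lra.
  - intros b Hb. apply Hb. exists (fun x : R2space => fst x). split.
    + split. intros a u v; simpl; ring. intros x; simpl; unfold v2norm; apply Rmax_l.
    + simpl. unfold ev; simpl. rewrite Rabs_R1, Rabs_R0. ring.
Qed.

Lemma q_bound : forall t c a b, 0 < t -> c * c = t * (1 - t) -> a * a <= 1 -> b * b <= 1 ->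
  Rabs (t * a ^ 2 + (2 * c * a * b + (-1) * t * b ^ 2)) <= 1.
Proof.
  intros t c a b Ht Hc Ha Hb. set (q := t * a ^ 2 + (2 * c * a * b + (-1) * t * b ^ 2)).
  assert (E1 : t * (a * a - q) = (t * b - c * a) ^ 2 + (t - t * t - c * c) * a * a) by (unfold q; ring).
  assert (E2 : t * (q + b * b) = (t * a + c * b) ^ 2 + (t - t * t - c * c) * b * b) by (unfold q; ring).
  assert (t - t * t - c * c = 0) by lra.
  rewrite H in E1, E2.
  assert (0 <= t * (a * a - q)) by (rewrite E1; pose proof (pow2_ge_0 (t * b - c * a)); lra).
  assert (0 <= t * (q + b * b)) by (rewrite E2; pose proof (pow2_ge_0 (t * a + c * b)); lra).
  assert (q <= a * a) by nra. assert (- (b * b) <= q) by nra.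
  unfold Rabs; destruct (Rcase_abs q); nra.
Qed.

Theorem mainTheorem5 :
  forall (k : nat), (1 <= k)%nat ->
  forall t0 : R, 1/2 <= t0 <= 1 ->
  (forall t, 1/2 <= t <= 1 -> gfun t <= gfun t0) ->
  forall L : R, admissible (2 * k) L ->
  lower_bound k t0 <= L.
Proof.
  intros k Hk t0 Ht _ L HL.
  set (m := (2 * k)%nat).
  set (F := fun j => Acoef k t0 j / C m j).
  set (c := sqrt (t0 * (1 - t0))).
  assert (Hc : c * c = t0 * (1 - t0)) by (apply sqrt_sqrt; nra).
  assert (Hdiag : forall a b : R, Aform m F (diag ((a, b) : R2space)) =
            (t0 * a ^ 2 + (2 * c * a * b + (-1) * t0 * b ^ 2)) ^ k).
  { intros a b. unfold Aform. rewrite <- (trinom k t0 (2 * c) a b).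
    replace (S m) with (2 * k + 1)%nat by (unfold m; lia).
    apply fsum_ext. intros j Hj. rewrite ((cp_diag m a b j ltac:(unfold m; lia)) : cp m (diag ((a, b) : R2space)) j = _).
    unfold F. assert (C m j <> 0).
    { unfold C. pose proof (INR_fact_lt_0 m). pose proof (INR_fact_lt_0 j). pose proof (INR_fact_lt_0 (m - j)).
      apply Rgt_not_eq, Rdiv_lt_0_compat; auto. apply Rmult_lt_0_compat; auto. }
    unfold Acoef. fold c. unfold Acoef'. unfold m in *. field. auto. }
  set (E := fun r => exists x : R2space, vnorm x <= 1 /\ r = Rabs (Aform m F (diag x))).
  assert (HE1 : is_upper_bound E 1).
  { intros r [[a b] [Hx ->]]. rewrite Hdiag. rewrite <- RPow_abs.
    simpl in Hx. unfold v2norm in Hx; simpl in Hx.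
    apply pow_le1. split; [apply Rabs_pos|]. apply q_bound; try lra; auto.
    apply abs_le1; eapply Rle_trans; [apply Rmax_l|exact Hx].
    apply abs_le1; eapply Rle_trans; [apply Rmax_r|exact Hx]. }
  assert (HEt : E (t0 ^ k)).
  { exists ((1, 0) : R2space). split.
    - simpl. apply norm_le1; [rewrite Rabs_R1|rewrite Rabs_R0]; lra.
    - rewrite Hdiag. rewrite Rabs_pos_eq; [f_equal; ring|apply pow_le; lra]. }
  destruct (completeness E) as [nP HnP]. exists 1; auto. exists (t0 ^ k); auto.
  assert (HnP1 : nP <= 1) by (apply HnP; auto).
  assert (HnP0 : 0 < nP).
  { apply Rlt_le_trans with (t0 ^ k). apply pow_lt; lra. apply HnP; auto. }
  assert (Hpoly : is_poly_norm R2space m (Aform m F) nP) by exact HnP.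
  pose proof (HL R2space (Aform m F) 2%nat (fun _ j => ev j) nP (fun _ => 1)
                (Aform_sym m F) Hpoly (fun _ _ => weak_ev)) as H.
  rewrite fprod_one, Rmult_1_r in H.
  rewrite (msum_ext m 2 _ (fun J => (fun j => rpow (Rabs (F j)) (2 * INR m / (INR m + 1))) (cnt m J))) in H
    by (intros J; rewrite Aform_ev; reflexivity).
  rewrite (msum_cnt m (fun j => rpow (Rabs (F j)) (2 * INR m / (INR m + 1)))) in H.
  assert (Hlb : lower_bound k t0 = rpow (fsum (S m) (fun j => C m j * rpow (Rabs (F j)) (2 * INR m / (INR m + 1))))
       ((INR m + 1) / (2 * INR m))).
  { unfold lower_bound. replace (S m) with (2 * k + 1)%nat by (unfold m; lia).
    assert (Hk0 : 0 < INR k) by (apply lt_0_INR; lia).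
    replace (2 * INR m / (INR m + 1)) with (4 * INR k / (2 * INR k + 1))
      by (unfold m; rewrite mult_INR; simpl; field; lra).
    replace ((INR m + 1) / (2 * INR m)) with ((2 * INR k + 1) / (4 * INR k))
      by (unfold m; rewrite mult_INR; simpl; field; lra).
    reflexivity. }
  rewrite Hlb.
  pose proof (rpow_nonneg (fsum (S m) (fun j => C m j * rpow (Rabs (F j)) (2 * INR m / (INR m + 1))))
       ((INR m + 1) / (2 * INR m))).
  set (Z := rpow _ _) in *. assert (0 <= L * nP) by lra. assert (0 <= L) by (apply Rmult_le_reg_r with nP; lra). nra.
Qed.
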